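(* Let $\mathbf{Sys}_0(L)$ be the full subcategory of $\mathbf{Sys}(L)$ consisting of $T_0$ affine systems, and let $\mathcal{M}$ be the class of monomorphisms $(f,\varphi)$ of $\mathbf{Sys}_0(L)$ for which the homomorphism $\varphi$ is surjective. Then the $\mathcal{M}$-injective objects of $\mathbf{Sys}_0(L)$ are precisely the retracts (in $\mathbf{Sys}_0(L)$) of powers $\mathsf{S}^I$ ($I$ a set) of the Sierpinski affine system $\mathsf{S}$.
   Context: Fix a variety $\mathbf{A}$ of algebras (a full subcategory of the category of $\Omega$-algebras and homomorphisms closed under products, subalgebras and homomorphic images), in which every algebra is non-empty, which has all set-indexed coproducts $(A_i\xrightarrow{\mu_i}\coprod_iA_i)_i$, and which has a free algebra $S$ over a singleton $\{*\}$ with universal map $\eta:\{*\}\to|S|$. For an algebra $A$ and $a\in A$ let $\overline{a}^A:S\to A$ be the unique homomorphism with $\eta( * )\mapsto a$. Fix an $\mathbf{A}$-algebra $L$ with more than one element; $L^X$ denotes the power algebra. An affine system is $(X,\kappa,A)$ with $X$ a set, $A$ an algebra and $\kappa:A\to L^X$ a homomorphism; a morphism $(f,\varphi):(X_1,\kappa_1,A_1)\to(X_2,\kappa_2,A_2)$ is a map $f:X_1\to X_2$ with a homomorphism $\varphi:A_2\to A_1$ such that $\kappa_1(\varphi(a))(x)=\kappa_2(a)(f(x))$ for all $a\in A_2,x\in X_1$; composition $(g,\psi)\circ(f,\varphi)=(g\circ f,\varphi\circ\psi)$. This is $\mathbf{Sys}(L)$. A system is $T_0$ if for all $x,y\in X$,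 $\kappa(a)(x)=\kappa(a)(y)$ for all $a\in A$ implies $x=y$. An object $C$ is $\mathcal{M}$-injective if for every $m:D\to E$ in $\mathcal{M}$ and every morphism $h:D\to C$ there is a morphism $g:E\to C$ with $g\circ m=h$. The Sierpinski affine system is $\mathsf{S}=(|L|,\kappa_S,S)$ with $\kappa_S:S\to L^{|L|}$ the unique homomorphism with $\kappa_S(s)(a)=\overline{a}^L(s)$ (equivalently $\kappa_S(\eta( * ))=\mathrm{id}_L$). Its power $\mathsf{S}^I$ is the product in $\mathbf{Sys}(L)$, namely $(|L|^I,\theta,\coprod_IS)$ with $\theta(\mu_i(s))(x)=\kappa_S(s)(x_i)$. *)

(* Defs.v *)
Unset Implicit Arguments.
Unset Strict Implicit.

Record signature := Signature { op : Type; arity : op -> Type }.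

Record alg (Sg : signature) := Alg {
  car :> Type;
  ops : forall o : op Sg, (@arity Sg o -> car) -> car }.
Arguments ops {Sg} a o _.
Arguments car {Sg} a.
Arguments Alg {Sg} car ops.

Definition is_hom {Sg} (A B : alg Sg) (h : A -> B) : Prop :=
  forall (o : op Sg) (args : @arity Sg o -> A),
    h (ops A o args) = ops B o (fun j => h (args j)).
Arguments is_hom {Sg} A B h.

Definition prod_alg {Sg} (I : Type) (A : I -> alg Sg) : alg Sg :=
  Alg (forall i, A i) (fun o args i => ops (A i) o (fun j => args j i)).

Definition pow_alg {Sg} (L : alg Sg) (X : Type) : alg Sg :=
  prod_alg X (fun _ : X => L).

Definition op_closed {Sg} (A : alg Sg) (P : A -> Prop) : Prop :=
  forall o (args : @arity Sg o -> A), (forall j, P (args j)) -> P (ops A o args).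

Definition sub_alg {Sg} (A : alg Sg) (P : A -> Prop) (HP : op_closed A P) : alg Sg :=
  Alg {x : A | P x}
    (fun o args => exist _ (ops A o (fun j => proj1_sig (args j)))
                           (HP o _ (fun j => proj2_sig (args j)))).

Definition variety {Sg} (V : alg Sg -> Prop) : Prop :=
  (forall (I : Type) (A : I -> alg Sg), (forall i, V (A i)) -> V (prod_alg I A)) /\
  (forall (A : alg Sg) (P : A -> Prop) (HP : op_closed A P),
      V A -> (exists x, P x) -> V (sub_alg A P HP)) /\
  (forall (A B : alg Sg) (h : A -> B),
      V A -> is_hom A B h -> (forall b, exists a, h a = b) -> V B).

Definition all_nonempty {Sg} (V : alg Sg -> Prop) : Prop :=
  forall A, V A -> inhabited (car A).

Definition is_coproduct {Sg} (V : alg Sg -> Prop) (I : Type) (A : I -> alg Sg)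
  (C : alg Sg) (mu : forall i, A i -> C) : Prop :=
  V C /\ (forall i, is_hom (A i) C (mu i)) /\
  forall B : alg Sg, V B -> forall (g : forall i, A i -> B),
    (forall i, is_hom (A i) B (g i)) ->
    (exists h : C -> B, is_hom C B h /\ forall i a, h (mu i a) = g i a) /\
    (forall h1 h2 : C -> B, is_hom C B h1 -> is_hom C B h2 ->
        (forall i a, h1 (mu i a) = g i a) -> (forall i a, h2 (mu i a) = g i a) ->
        forall c, h1 c = h2 c).

Definition has_coproducts {Sg} (V : alg Sg -> Prop) : Prop :=
  forall (I : Type) (A : I -> alg Sg), (forall i, V (A i)) ->
    exists (C : alg Sg) (mu : forall i, A i -> C), is_coproduct V I A C mu.

Definition is_free_singleton {Sg} (V : alg Sg -> Prop) (S : alg Sg) (eta : S) : Prop :=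
  V S /\
  forall B : alg Sg, V B -> forall b : B,
    (exists h : S -> B, is_hom S B h /\ h eta = b) /\
    (forall h1 h2 : S -> B, is_hom S B h1 -> is_hom S B h2 ->
        h1 eta = b -> h2 eta = b -> forall s, h1 s = h2 s).

Section Systems.
Variables (Sg : signature) (V : alg Sg -> Prop) (L : alg Sg).

Record system := mkSys {
  sX : Type;
  sA : alg Sg;
  sAV : V sA;
  kappa : sA -> sX -> L;
  kappa_hom : is_hom sA (pow_alg L sX) kappa }.
Arguments kappa {s} _ _.
Arguments kappa_hom {s} _ _.

Record mor (D E : system) := mkMor {
  mf : sX D -> sX E;
  mphi : sA E -> sA D;
  mphi_hom : is_hom (sA E) (sA D) mphi;
  mcompat : forall (a : sA E) (x : sX D), kappa (mphi a) x = kappa a (mf x) }.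
Arguments mf {D E} _ _.
Arguments mphi {D E} _ _.
Arguments mphi_hom {D E} _ _ _.
Arguments mcompat {D E} _ _ _.

Definition idm (D : system) : mor D D.
Proof.
  refine (@mkMor D D (fun x => x) (fun a => a) _ _).
  - intros o args; reflexivity.
  - intros a x; reflexivity.
Defined.

Definition comp (D E F : system) (g : mor E F) (f : mor D E) : mor D F.
Proof.
  refine (@mkMor D F (fun x => mf g (mf f x)) (fun a => mphi f (mphi g a)) _ _).
  - intros o args. rewrite (mphi_hom g), (mphi_hom f). reflexivity.
  - intros a x. rewrite (mcompat f), (mcompat g). reflexivity.
Defined.
Arguments comp {D E F} g f.

Definition meq (D E : system) (f g : mor D E) : Prop :=
  (forall x, mf f x = mf g x) /\ (forall a, mphi f a = mphi g a).
Arguments meq {D E} f g.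

Definition T0 (D : system) : Prop :=
  forall x y : sX D, (forall a : sA D, kappa a x = kappa a y) -> x = y.

Definition mono0 (D E : system) (m : mor D E) : Prop :=
  forall Z : system, T0 Z -> forall g h : mor Z D,
    meq (comp m g) (comp m h) -> meq g h.
Arguments mono0 {D E} m.

Definition inM (D E : system) (m : mor D E) : Prop :=
  T0 D /\ T0 E /\ mono0 m /\ (forall a : sA D, exists b : sA E, mphi m b = a).
Arguments inM {D E} m.

Definition M_injective0 (C : system) : Prop :=
  forall (D E : system) (m : mor D E), inM m ->
    forall h : mor D C, exists g : mor E C, meq (comp g m) h.

(* retracts in Sys_0(L) (the category is full, so morphisms are those of Sys(L)) *)
Definition retract_of (C P : system) : Prop :=
  T0 C /\ T0 P /\
  exists (s : mor C P) (r : mor P C), meq (comp r s) (idm C).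

(* C is a retract of some power S^I = (|L|^I, theta, coprod_I S) of the
   Sierpinski system S = (|L|, kS, S) *)
Definition retract_of_Sierpinski_power (S : alg Sg)
    (kS : S -> car L -> car L) (C : system) : Prop :=
  exists (I : Type) (Cp : alg Sg) (HCp : V Cp) (mu : I -> S -> Cp)
         (theta : Cp -> (I -> car L) -> car L)
         (Htheta : is_hom Cp (pow_alg L (I -> car L)) theta),
    is_coproduct V I (fun _ : I => S) Cp mu /\
    (forall (i : I) (s : S) (x : I -> car L), theta (mu i s) x = kS s (x i)) /\
    retract_of C (@mkSys (I -> car L) Cp HCp theta Htheta).

End Systems.

Arguments system {Sg} V L.
Arguments T0 {Sg V L} D.
Arguments M_injective0 {Sg V L} C.
Arguments retract_of_Sierpinski_power {Sg V L} S kS C.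

(* Main.v *)
Require Import Defs.
From Stdlib Require Import FunctionalExtensionality ClassicalEpsilon.

Local Arguments kappa {Sg V L s} _ _.
Local Arguments kappa_hom {Sg V L s} _ _.
Local Arguments sX {Sg V L} _.
Local Arguments sA {Sg V L} _.
Local Arguments sAV {Sg V L} _.
Local Arguments mkSys {Sg V L} sX sA sAV kappa kappa_hom.
Local Arguments mf {Sg V L D E} _ _.
Local Arguments mphi {Sg V L D E} _ _.
Local Arguments mphi_hom {Sg V L D E} _ _ _.
Local Arguments mcompat {Sg V L D E} _ _ _.
Local Arguments mkMor {Sg V L D E} mf mphi mphi_hom mcompat.
Local Arguments comp {Sg V L D E F} g f.
Local Arguments meq {Sg V L D E} f g.
Local Arguments inM {Sg V L D E} m.
Local Arguments idm {Sg V L} D.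
Local Arguments retract_of {Sg V L} C P.
Local Arguments mono0 {Sg V L D E} m.

Section Proof.
Context (Sg : signature) (V : alg Sg -> Prop).

Lemma hom_comp (A B C : alg Sg) (f : A -> B) (g : B -> C) :
  is_hom A B f -> is_hom B C g -> is_hom A C (fun a => g (f a)).
Proof. intros Hf Hg o args. rewrite Hf, Hg. reflexivity. Qed.

Lemma hom_ext (A B : alg Sg) (f g : A -> B) :
  (forall a, f a = g a) -> is_hom A B g -> is_hom A B f.
Proof.
  intros E Hg o args. rewrite E, Hg. f_equal. apply functional_extensionality.
  intro j. symmetry. apply E.
Qed.

Lemma hom_eval (A L : alg Sg) (X : Type) (k : A -> X -> L) (x : X) :
  is_hom A (pow_alg L X) k -> is_hom A L (fun a => k a x).
Proof. intros Hk o args. rewrite Hk. reflexivity. Qed.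

Lemma hom_eval_comp (A B L : alg Sg) (X : Type) (f : A -> B) (k : B -> X -> L) (x : X) :
  is_hom A B f -> is_hom B (pow_alg L X) k -> is_hom A L (fun a => k (f a) x).
Proof. intros Hf Hk o args. rewrite Hf, Hk. reflexivity. Qed.

Lemma free_unique S eta (HS : is_free_singleton V S eta) (B : alg Sg) (HB : V B)
  (h1 h2 : S -> B) : is_hom S B h1 -> is_hom S B h2 -> h1 eta = h2 eta ->
  forall s, h1 s = h2 s.
Proof.
  intros H1 H2 He. destruct HS as [_ HS].
  destruct (HS B HB (h2 eta)) as [_ U]. apply U; auto.
Qed.

Definition freeh S eta (HS : is_free_singleton V S eta) (B : alg Sg) (HB : V B) (b : B)
  : {h : S -> B | is_hom S B h /\ h eta = b} :=
  constructive_indefinite_description _ (proj1 (proj2 HS B HB b)).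

Lemma cop_unique I (A : I -> alg Sg) C mu (H : is_coproduct V I A C mu)
  (B : alg Sg) (HB : V B) (h1 h2 : C -> B) :
  (forall i, is_hom (A i) B (fun a => h1 (mu i a))) ->
  is_hom C B h1 -> is_hom C B h2 -> (forall i a, h1 (mu i a) = h2 (mu i a)) ->
  forall c, h1 c = h2 c.
Proof.
  intros Hg H1 H2 E. destruct H as [_ [_ H]].
  destruct (H B HB (fun i a => h1 (mu i a)) Hg) as [_ U].
  apply U; auto.
Qed.

Definition coph I (A : I -> alg Sg) C mu (H : is_coproduct V I A C mu)
  (B : alg Sg) (HB : V B) (g : forall i, A i -> B) (Hg : forall i, is_hom (A i) B (g i))
  : {h : C -> B | is_hom C B h /\ forall i a, h (mu i a) = g i a} :=
  constructive_indefinite_description _ (proj1 (proj2 (proj2 H) B HB g Hg)).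

Context (L : alg Sg).

Lemma retract_inj (C P : system V L) :
  retract_of C P -> M_injective0 P -> M_injective0 C.
Proof.
  intros [_ [_ [s [r [Hr1 Hr2]]]]] HP D E m Hm h.
  destruct (HP D E m Hm (comp s h)) as [g [Hg1 Hg2]].
  exists (comp r g). split; simpl in *.
  - intros x. rewrite Hg1. apply Hr1.
  - intros a. rewrite Hg2. f_equal. apply Hr2.
Qed.

Context (S : alg Sg) (eta : S) (HS : is_free_singleton V S eta) (HL : V L)
  (kS : S -> car L -> car L) (HkS : is_hom S (pow_alg L (car L)) kS)
  (HkSeta : forall a : car L, kS eta a = a).

Section Pow.
Context (I : Type) (Cp : alg Sg) (HCp : V Cp) (mu : I -> S -> Cp)
  (theta : Cp -> (I -> car L) -> car L)
  (Htheta : is_hom Cp (pow_alg L (I -> car L)) theta)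
  (Hcp : is_coproduct V I (fun _ => S) Cp mu)
  (Hth : forall (i : I) (s : S) (x : I -> car L), theta (mu i s) x = kS s (x i)).

Definition SP : system V L := mkSys (I -> car L) Cp HCp theta Htheta.

Lemma SP_T0 : T0 SP.
Proof.
  intros x y H. apply functional_extensionality. intro i.
  specialize (H (mu i eta)). simpl in H. rewrite !Hth, !HkSeta in H. exact H.
Qed.

Lemma SP_inj : M_injective0 SP.
Proof.
  intros D E m [HD [HE [_ Hsurj]]] h.
  assert (Hb : forall i, {b : sA E | mphi m b = mphi h (mu i eta)}).
  { intro i. apply constructive_indefinite_description. apply Hsurj. }
  pose (g := fun i => proj1_sig (freeh S eta HS (sA E) (sAV E) (proj1_sig (Hb i)))).
  assert (Hg : forall i, is_hom S (sA E) (g i)).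
  { intro i. exact (proj1 (proj2_sig (freeh S eta HS (sA E) (sAV E) (proj1_sig (Hb i))))). }
  assert (Hge : forall i, g i eta = proj1_sig (Hb i)).
  { intro i. exact (proj2 (proj2_sig (freeh S eta HS (sA E) (sAV E) (proj1_sig (Hb i))))). }
  destruct (coph I (fun _ => S) Cp mu Hcp (sA E) (sAV E) g Hg) as [gphi [Hgphi Hgmu]].
  pose (gf := fun (y : sX E) (i : I) => kappa (proj1_sig (Hb i)) y).
  assert (Hc : forall (c : Cp) (y : sX E), kappa (gphi c) y = theta c (gf y)).
  { intros c y.
    apply (cop_unique I (fun _ => S) Cp mu Hcp L HL
             (fun c => kappa (gphi c) y) (fun c => theta c (gf y))).
    - intro i. apply hom_ext with (g := fun a => kappa (g i a) y).
      { intro a. simpl. rewrite Hgmu. reflexivity. }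
      apply hom_eval_comp with (B := sA E); auto. apply kappa_hom.
    - apply hom_eval_comp with (B := sA E); auto. apply kappa_hom.
    - exact (hom_eval Cp L (I -> car L) theta (gf y) Htheta).
    - intros i s. rewrite Hgmu, Hth.
      apply (free_unique S eta HS L HL (fun s => kappa (g i s) y) (fun s => kS s (gf y i))).
      + apply hom_eval_comp with (B := sA E); auto. apply kappa_hom.
      + exact (hom_eval S L (car L) kS (gf y i) HkS).
      + rewrite HkSeta, Hge. reflexivity. }
  exists (mkMor (E := SP) gf gphi Hgphi Hc). split; simpl.
  - intros x. apply functional_extensionality. intro i. unfold gf.
    rewrite <- (mcompat m), (proj2_sig (Hb i)), (mcompat h). simpl.
    rewrite Hth, HkSeta. reflexivity.
  - intros c.
    apply (cop_unique I (fun _ => S) Cp mu Hcp (sA D) (sAV D)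
             (fun c => mphi m (gphi c)) (fun c => mphi h c)).
    + intro i. apply hom_comp with (B := sA E).
      * apply hom_ext with (g := g i). { intro a. apply Hgmu. } apply Hg.
      * apply mphi_hom.
    + apply hom_comp with (B := sA E); auto. apply mphi_hom.
    + exact (mphi_hom h).
    + intros i s. rewrite Hgmu.
      apply (free_unique S eta HS (sA D) (sAV D) (fun s => mphi m (g i s)) (fun s => mphi h (mu i s))).
      * apply hom_comp with (B := sA E); auto. apply mphi_hom.
      * apply hom_comp with (B := Cp). { intros o args. destruct Hcp as [_ [Hm _]]. apply (Hm i). }
        exact (mphi_hom h).
      * rewrite Hge. exact (proj2_sig (Hb i)).
Qed.
End Pow.

Lemma mono_of (D E : system V L) (m : mor Sg V L D E) :
  T0 D -> (forall a, exists b, mphi m b = a) -> mono0 m.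
Proof.
  intros HD Hs Z HZ g h [H1 H2]. simpl in *.
  assert (Hp : forall a, mphi g a = mphi h a).
  { intro a. destruct (Hs a) as [b <-]. apply H2. }
  split; auto.
  intro z. apply HD. intro a. rewrite <- (mcompat g a z), <- (mcompat h a z). rewrite Hp. reflexivity.
Qed.

Lemma forward (HV : variety V) (Hcop : has_coproducts V) (C : system V L) (HC : T0 C) :
  M_injective0 C -> retract_of_Sierpinski_power S kS C.
Proof.
  intros HM.
  destruct (Hcop (sA C) (fun _ => S) (fun _ => proj1 HS)) as [Cp [mu Hcp]].
  pose proof (proj1 Hcp) as HCp.
  assert (Hmu : forall i, is_hom S Cp (mu i)) by exact (proj1 (proj2 Hcp)).
  assert (Hth : forall a : sA C, is_hom S (pow_alg L (sA C -> car L))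
                 (fun s x => kS s (x a))).
  { intros a o args. simpl. apply functional_extensionality. intro x.
    rewrite HkS. reflexivity. }
  assert (HPV : V (pow_alg L (sA C -> car L))).
  { destruct HV as [HP _]. apply HP. intro. exact HL. }
  destruct (coph (sA C) (fun _ => S) Cp mu Hcp (pow_alg L (sA C -> car L)) HPV
              (fun a s x => kS s (x a)) Hth) as [theta [Htheta Hthmu]].
  assert (Hthx : forall i s x, theta (mu i s) x = kS s (x i)).
  { intros i s x. rewrite Hthmu. reflexivity. }
  pose (P := SP (sA C) Cp HCp theta Htheta).
  pose (g := fun a => proj1_sig (freeh S eta HS (sA C) (sAV C) a)).
  assert (Hg : forall a, is_hom S (sA C) (g a)).
  { intro a. exact (proj1 (proj2_sig (freeh S eta HS (sA C) (sAV C) a))). }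
  assert (Hge : forall a, g a eta = a).
  { intro a. exact (proj2 (proj2_sig (freeh S eta HS (sA C) (sAV C) a))). }
  destruct (coph (sA C) (fun _ => S) Cp mu Hcp (sA C) (sAV C) g Hg) as [ephi [Hephi Hemu]].
  pose (ef := fun (x : sX C) (a : sA C) => kappa a x).
  assert (Hc : forall (c : Cp) (y : sX C), kappa (ephi c) y = theta c (ef y)).
  { intros c y.
    apply (cop_unique (sA C) (fun _ => S) Cp mu Hcp L HL
             (fun c => kappa (ephi c) y) (fun c => theta c (ef y))).
    - intro i. apply hom_ext with (g := fun a => kappa (g i a) y).
      { intro a. simpl. rewrite Hemu. reflexivity. }
      apply hom_eval_comp with (B := sA C); auto. apply kappa_hom.
    - apply hom_eval_comp with (B := sA C); auto. apply kappa_hom.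
    - exact (hom_eval Cp L (sA C -> car L) theta (ef y) Htheta).
    - intros i s. rewrite Hemu, Hthx.
      apply (free_unique S eta HS L HL (fun s => kappa (g i s) y) (fun s => kS s (ef y i))).
      + apply hom_eval_comp with (B := sA C); auto. apply kappa_hom.
      + exact (hom_eval S L (car L) kS (ef y i) HkS).
      + rewrite HkSeta, Hge. reflexivity. }
  pose (e := mkMor (D := C) (E := P) ef ephi Hephi Hc).
  assert (HP0 : T0 P) by exact (SP_T0 (sA C) Cp HCp mu theta Htheta Hthx).
  assert (Hsurj : forall a : sA C, exists b, mphi e b = a).
  { intro a. exists (mu a eta). simpl. rewrite Hemu. apply Hge. }
  destruct (HM C P e (conj HC (conj HP0 (conj (mono_of C P e HC Hsurj) Hsurj))) (idm C))
    as [r Hr].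
  exists (sA C), Cp, HCp, mu, theta, Htheta. split; [exact Hcp|]. split; [exact Hthx|].
  split; [exact HC|]. split; [exact HP0|]. exists e, r. exact Hr.
Qed.

End Proof.

Theorem theorem3
  (Sg : signature) (V : alg Sg -> Prop)
  (HV : variety V) (Hne : all_nonempty V) (Hcop : has_coproducts V)
  (S : alg Sg) (eta : S) (HS : is_free_singleton V S eta)
  (L : alg Sg) (HL : V L) (HL2 : exists x y : car L, x <> y)
  (kS : S -> car L -> car L)
  (HkS : is_hom S (pow_alg L (car L)) kS)
  (HkSeta : forall a : car L, kS eta a = a)
  (C : system V L) (HC : T0 C) :
  M_injective0 C <-> retract_of_Sierpinski_power S kS C.
Proof.
  split.
  - apply (forward Sg V L S eta HS HL kS HkS HkSeta HV Hcop C HC).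
  - intros [I [Cp [HCp [mu [theta [Htheta [Hcp [Hth Hr]]]]]]]].
    eapply retract_inj; [exact Hr|].
    eapply SP_inj; eauto.
Qed.
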